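(* Let $f:[0,1]\to\mathbb{R}$ with $f(0),f(1)\in\mathbb{Z}$, and let $n\in\mathbb{N}_+$, $n\ge 3$. Set \[ \psi_n(x):=(n+1)\int_0^1 t(1-t)^{n(1-x)+1}\frac{(1-t)^{nx-1}-t^{nx-1}}{1-2t}\,dt,\quad x\in[0,1]. \] If $f(x)+\psi_n(x)$ is monotone decreasing on $[0,1]$, then $\widetilde{B}_n(f)$ is monotone decreasing on $[0,1]$.
   Context: For $n\in\mathbb{N}_+$ and $f:[0,1]\to\mathbb{R}$, $\widetilde{B}_n(f)(x):=\sum_{k=0}^n \left[f\left(\frac{k}{n}\right)\binom{n}{k}\right]x^k(1-x)^{n-k}$, where $[\alpha]$ is the largest integer $\le\alpha$. Monotone decreasing is meant in the non-strict sense. *)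

(* Defs.v *)
From Stdlib Require Import Reals.
From Coquelicot Require Import Coquelicot.
Open Scope R_scope.

Definition floorR (a : R) : R := IZR (Int_part a).

Definition Btilde (n : nat) (f : R -> R) (x : R) : R :=
  sum_f_R0 (fun k => floorR (f (INR k / INR n) * Binomial.C n k)
                     * x ^ k * (1 - x) ^ (n - k)) n.

(* psi_n(x) = (n+1) int_0^1 t (1-t)^{n(1-x)+1}
                 ((1-t)^{nx-1} - t^{nx-1}) / (1-2t) dt
   (real powers of positive bases via Rpower; the integrand is bounded on
   (0,1) with a removable singularity at t = 1/2, so the values at the
   finitely many points t = 0, 1/2, 1 do not affect the Riemann integral) *)
Definition psi (n : nat) (x : R) : R :=
  (INR n + 1) *
  RInt (fun t => t * Rpower (1 - t) (INR n * (1 - x) + 1)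
                 * (Rpower (1 - t) (INR n * x - 1) - Rpower t (INR n * x - 1))
                 / (1 - 2 * t)) 0 1.

Definition decreasing_on_01 (g : R -> R) : Prop :=
  forall x y, 0 <= x -> x <= y -> y <= 1 -> g y <= g x.

(* Main.v *)
Require Import Defs.
From Stdlib Require Import Reals Lra Lia.
From Coquelicot Require Import Coquelicot.
Open Scope R_scope.

Definition Bern (n:nat) (b:nat->R) (x:R) :=
  sum_f_R0 (fun k => b k * Binomial.C n k * x^k * (1-x)^(n-k)) n.

Lemma C_n0 n : Binomial.C n 0 = 1.
Proof. unfold Binomial.C. rewrite Nat.sub_0_r. simpl. field. apply INR_fact_neq_0. Qed.
Lemma C_nn n : Binomial.C n n = 1.
Proof. unfold Binomial.C. rewrite Nat.sub_diag. simpl. field. apply INR_fact_neq_0. Qed.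

Lemma Bern_rec m b x : Bern (S m) b x = (1-x) * Bern m b x + x * Bern m (fun k => b (S k)) x.
Proof.
  unfold Bern. destruct m as [|m'].
  - simpl. rewrite !C_n0, C_nn. ring.
  - rewrite (decomp_sum _ (S (S m'))) by lia. simpl Init.Nat.pred.
    rewrite tech5.
    rewrite (decomp_sum _ (S m')) by lia. simpl Init.Nat.pred.
    rewrite (tech5 (fun k => b (S k) * _ * _ * _)).
    rewrite (sum_eq (fun i => b (S i) * Binomial.C (S (S m')) (S i) * x ^ S i * (1 - x) ^ (S (S m') - S i))
       (fun i => b (S i) * Binomial.C (S m') i * x ^ S i * (1 - x) ^ (S m' - i) +
                 b (S i) * Binomial.C (S m') (S i) * x ^ S i * (1 - x) ^ (S m' - i))).
    2:{ intros i Hi. rewrite <- pascal by lia. replace (S (S m') - S i)%nat with (S m' - i)%nat by lia. ring. }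
    rewrite sum_plus.
    rewrite !Rmult_plus_distr_l.
    rewrite !scal_sum.
    rewrite (sum_eq (fun i => b (S i) * Binomial.C (S m') (S i) * x ^ S i * (1 - x) ^ (S m' - S i) * (1 - x))
       (fun i => b (S i) * Binomial.C (S m') (S i) * x ^ S i * (1 - x) ^ (S m' - i))).
    2:{ intros i Hi. replace (S m' - i)%nat with (S (S m' - S i)) by lia. simpl. ring. }
    rewrite (sum_eq (fun i => b (S i) * Binomial.C (S m') i * x ^ i * (1 - x) ^ (S m' - i) * x)
       (fun i => b (S i) * Binomial.C (S m') i * x ^ S i * (1 - x) ^ (S m' - i))).
    2:{ intros i Hi. simpl. ring. }
    rewrite !C_n0, !C_nn, !Nat.sub_diag, !Nat.sub_0_r. simpl. ring.
Qed.
Lemma Bern0 b x : Bern 0 b x = b 0%nat.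
Proof. unfold Bern. simpl. rewrite C_n0. ring. Qed.

Lemma Bern_mono n : forall b b' x, (forall k, (k <= n)%nat -> b k <= b' k) -> 0 <= x <= 1 ->
  Bern n b x <= Bern n b' x.
Proof.
  induction n as [|m IH]; intros b b' x Hb Hx.
  - rewrite !Bern0. apply Hb; lia.
  - rewrite !Bern_rec.
    assert (H1 := IH b b' x ltac:(intros k Hk; apply Hb; lia) Hx).
    assert (H2 := IH (fun k => b (S k)) (fun k => b' (S k)) x ltac:(intros k Hk; apply Hb; lia) Hx).
    nra.
Qed.

Lemma Bern_decr n : forall b, (forall k, (k < n)%nat -> b (S k) <= b k) ->
  forall x y, 0 <= x -> x <= y -> y <= 1 -> Bern n b y <= Bern n b x.
Proof.
  induction n as [|m IH]; intros b Hb x y H0 Hxy Hy.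
  - rewrite !Bern0. lra.
  - rewrite !Bern_rec.
    assert (HA := IH b ltac:(intros k Hk; apply Hb; lia) x y H0 Hxy Hy).
    assert (HB := IH (fun k => b (S k)) ltac:(intros k Hk; apply Hb; lia) x y H0 Hxy Hy).
    assert (HM := Bern_mono m (fun k => b (S k)) b x ltac:(intros k Hk; apply Hb; lia) ltac:(lra)).
    set (Ax := Bern m b x) in *. set (Ay := Bern m b y) in *.
    set (Bx := Bern m (fun k => b (S k)) x) in *. set (By := Bern m (fun k => b (S k)) y) in *.
    assert ((1-y)*(Ay-Ax) <= 0) by nra.
    assert (y*(By-Bx) <= 0) by nra.
    assert ((y-x)*(Ax-Bx) >= 0) by nra.
    nra.
Qed.
Definition beta (a b : nat) : R :=
  INR (Factorial.fact a) * INR (Factorial.fact b) / INR (Factorial.fact (a + b + 1)).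

Lemma cont_poly a b x : continuous (fun t => t ^ a * (1 - t) ^ b) x.
Proof. apply (ex_derive_continuous (K:=R_AbsRing) (V:=R_NormedModule)). auto_derive. auto. Qed.

Lemma beta_is b : forall a, is_RInt (fun t => t ^ a * (1 - t) ^ b) 0 1 (beta a b).
Proof.
  induction b as [|b IH]; intros a.
  - assert (H := is_RInt_derive (fun t => t ^ (S a) / INR (S a)) (fun t => t ^ a * (1 - t) ^ 0) 0 1).
    replace (beta a 0) with (minus (1 ^ (S a) / INR (S a)) (0 ^ (S a) / INR (S a))).
    + apply H.
      * intros x _. 
        auto_derive.
        -- exact I.
        -- change (match a with 0%nat => 1 | S _ => INR a + 1 end) with (INR (S a)). rewrite pow_O. field. apply not_0_INR. lia.
      * intros x _. apply cont_poly.
    + unfold beta. rewrite Nat.add_0_r, Nat.add_1_r.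
      change (Factorial.fact (S a)) with (S a * Factorial.fact a)%nat. rewrite mult_INR.
      assert (Hd : INR (S a) <> 0) by (apply not_0_INR; lia).
      pose proof (INR_fact_neq_0 a).
      set (d := INR (S a)) in *. set (F := INR (Factorial.fact a)) in *.
      unfold minus, plus, opp; simpl. rewrite pow1. clearbody d F. change (1 * 1 / d + - (0 * 0 ^ a / d) = F * 1 / (d * F)). field. tauto.
  - assert (H := is_RInt_minus _ _ 0 1 _ _ (IH a) (IH (S a))).
    replace (beta a (S b)) with (minus (beta a b) (beta (S a) b)).
    + refine (is_RInt_ext _ _ _ _ _ _ H). intros x _. unfold minus, plus, opp; simpl. ring.
    + unfold beta.
      replace (a + S b + 1)%nat with (S (a + b + 1)) by lia.
      replace (S a + b + 1)%nat with (S (a + b + 1)) by lia.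
      change (Factorial.fact (S b)) with (S b * Factorial.fact b)%nat.
      change (Factorial.fact (S a)) with (S a * Factorial.fact a)%nat.
      change (Factorial.fact (S (a + b + 1))) with (S (a + b + 1) * Factorial.fact (a + b + 1))%nat.
      rewrite !mult_INR, !S_INR, !plus_INR.
      pose proof (INR_fact_neq_0 a). pose proof (INR_fact_neq_0 b). pose proof (INR_fact_neq_0 (a+b+1)).
      pose proof (pos_INR a); pose proof (pos_INR b).
      set (Fa := INR (Factorial.fact a)) in *. set (Fb := INR (Factorial.fact b)) in *.
      set (Fc := INR (Factorial.fact (a+b+1))) in *. set (ia := INR a) in *. set (ib := INR b) in *.
      unfold minus, plus, opp; simpl. clearbody Fa Fb Fc ia ib.
      field. split; [tauto|lra].
Qed.
Lemma ext_half (f g : R -> R) v :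
  (forall t, 0 < t < 1 -> t <> 1/2 -> g t = f t) -> is_RInt g 0 1 v -> is_RInt f 0 1 v.
Proof.
  intros Hfg Hg.
  assert (Eg : ex_RInt g 0 1) by (exists v; exact Hg).
  assert (E1 : ex_RInt g 0 (1/2)) by (apply (ex_RInt_Chasles_1 g 0 (1/2) 1); [lra|exact Eg]).
  assert (E2 : ex_RInt g (1/2) 1) by (apply (ex_RInt_Chasles_2 g 0 (1/2) 1); [lra|exact Eg]).
  assert (H1 : is_RInt f 0 (1/2) (RInt g 0 (1/2))).
  { refine (is_RInt_ext _ _ _ _ _ _ (RInt_correct _ _ _ E1)).
    intros t Ht. rewrite Rmin_left in Ht by lra. rewrite Rmax_right in Ht by lra.
    apply Hfg; lra. }
  assert (H2 : is_RInt f (1/2) 1 (RInt g (1/2) 1)).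
  { refine (is_RInt_ext _ _ _ _ _ _ (RInt_correct _ _ _ E2)).
    intros t Ht. rewrite Rmin_left in Ht by lra. rewrite Rmax_right in Ht by lra.
    apply Hfg; lra. }
  assert (H := is_RInt_Chasles _ _ _ _ _ _ H1 H2).
  assert (HC := RInt_Chasles g 0 (1/2) 1 E1 E2).
  rewrite (is_RInt_unique _ _ _ _ Hg) in HC.
  unfold plus in H, HC; simpl in H, HC. rewrite HC in H. exact H.
Qed.

Lemma Rpower_km1 t k : 0 < t -> Rpower t (INR k - 1) = t ^ k / t.
Proof.
  intros Ht.
  assert (H : Rpower t (INR k) = Rpower t (INR k - 1) * t).
  { rewrite <- (Rpower_1 t) at 3 by exact Ht. rewrite <- Rpower_plus. f_equal. ring. }
  rewrite Rpower_pow in H by exact Ht. rewrite H. field. lra.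
Qed.

Definition Gi (n : nat) (x : R) (t : R) : R :=
  t * Rpower (1 - t) (INR n * (1 - x) + 1)
    * (Rpower (1 - t) (INR n * x - 1) - Rpower t (INR n * x - 1)) / (1 - 2 * t).

Lemma psi_Gi n x : psi n x = (INR n + 1) * RInt (Gi n x) 0 1.
Proof. reflexivity. Qed.

Lemma G_form n k t : (k <= n)%nat -> (0 < n)%nat -> 0 < t < 1 ->
  Gi n (INR k / INR n) t = (1 - t) ^ (n - k) * (t * (1 - t) ^ k - (1 - t) * t ^ k) / (1 - 2 * t).
Proof.
  intros Hk Hn Ht.
  assert (Hn' : INR n <> 0) by (apply not_0_INR; lia).
  unfold Gi.
  replace (INR n * (INR k / INR n)) with (INR k) by (field; exact Hn').
  replace (INR n * (1 - INR k / INR n) + 1) with (INR (n - k) + 1) by (rewrite minus_INR by exact Hk; field; exact Hn').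
  rewrite Rpower_plus, Rpower_pow, Rpower_1 by lra.
  rewrite !Rpower_km1 by lra.
  unfold Rdiv. f_equal. field. lra.
Qed.

Lemma G_step n k : (S k <= n)%nat -> ex_RInt (Gi n (INR k / INR n)) 0 1 ->
  is_RInt (Gi n (INR (S k) / INR n)) 0 1 (RInt (Gi n (INR k / INR n)) 0 1 + beta k (n - k)).
Proof.
  intros Hk E.
  apply (ext_half _ (fun t => plus (Gi n (INR k / INR n) t) (t ^ k * (1 - t) ^ (n - k)))).
  - intros t Ht Ht2. assert (1 - 2 * t <> 0) by (intro; apply Ht2; lra). 
    rewrite !G_form by first [lia|lra]. unfold plus; simpl.
    replace (n - k)%nat with (S (n - S k)) by lia.
    simpl. field. auto.
  - apply (is_RInt_plus _ _ _ _ _ _ (RInt_correct _ _ _ E) (beta_is _ _)).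
Qed.

Lemma G_ex n : (0 < n)%nat -> forall k, (k <= n)%nat -> ex_RInt (Gi n (INR k / INR n)) 0 1.
Proof.
  intros Hn. induction k as [|k IH]; intros Hk.
  - exists (opp (beta 0 n)).
    apply (ext_half _ (fun t => opp (t ^ 0 * (1 - t) ^ (n - 0)))).
    + intros t Ht Ht2. assert (1 - 2 * t <> 0) by (intro; apply Ht2; lra). rewrite G_form by first [lia|lra]. unfold opp; simpl. simpl. field. auto.
    + apply (is_RInt_opp (V:=R_NormedModule)). rewrite Nat.sub_0_r. apply beta_is.
  - eexists. apply G_step; [lia|]. apply IH; lia.
Qed.

Lemma psi_diff n k : (0 < n)%nat -> (S k <= n)%nat ->
  psi n (INR (S k) / INR n) - psi n (INR k / INR n) = / Binomial.C n k.
Proof.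
  intros Hn Hk.
  rewrite !psi_Gi.
  rewrite (is_RInt_unique _ _ _ _ (G_step n k Hk (G_ex n Hn k ltac:(lia)))).
  unfold beta, Binomial.C.
  replace (k + (n - k) + 1)%nat with (S n) by lia.
  change (Factorial.fact (S n)) with (S n * Factorial.fact n)%nat.
  rewrite mult_INR, S_INR.
  pose proof (INR_fact_neq_0 n). pose proof (INR_fact_neq_0 k). pose proof (INR_fact_neq_0 (n - k)).
  pose proof (pos_INR n).
  field. repeat split; auto; lra.
Qed.
Lemma C_pos n k : 0 < Binomial.C n k.
Proof.
  unfold Binomial.C. apply Rdiv_lt_0_compat; [apply INR_fact_lt_0|].
  apply Rmult_lt_0_compat; apply INR_fact_lt_0.
Qed.

Lemma fl_le a c : 0 < c -> floorR (a * c) / c <= a.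
Proof.
  intros Hc. destruct (base_Int_part (a * c)) as [H1 H2]. unfold floorR.
  replace a with (a * c / c) at 2 by (field; lra).
  unfold Rdiv. apply Rmult_le_compat_r; [left; apply Rinv_0_lt_compat; exact Hc|exact H1].
Qed.

Lemma fl_gt a c : 0 < c -> a - / c < floorR (a * c) / c.
Proof.
  intros Hc. destruct (base_Int_part (a * c)) as [H1 H2]. unfold floorR.
  replace (a - / c) with ((a * c - 1) / c) by (field; lra).
  unfold Rdiv. apply Rmult_lt_compat_r; [apply Rinv_0_lt_compat; exact Hc|lra].
Qed.

Theorem corollary2p7 (f : R -> R) (n : nat) :
  (3 <= n)%nat ->
  (exists z0 : Z, f 0 = IZR z0) ->
  (exists z1 : Z, f 1 = IZR z1) ->
  decreasing_on_01 (fun x => f x + psi n x) ->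
  decreasing_on_01 (Btilde n f).
Proof.
  intros Hn _ _ Hdec.
  set (b := fun k => floorR (f (INR k / INR n) * Binomial.C n k) / Binomial.C n k).
  assert (Heq : forall z, Btilde n f z = Bern n b z).
  { intros z. unfold Btilde, Bern, b. apply sum_eq. intros i _.
    pose proof (C_pos n i). field. lra. }
  intros x y H0 Hxy Hy. rewrite !Heq.
  apply (Bern_decr n b); auto.
  intros k Hk.
  assert (Hnp : 0 < INR n) by (apply lt_0_INR; lia).
  assert (Hx0 : 0 <= INR k / INR n) by (apply Rdiv_le_0_compat; [apply pos_INR|exact Hnp]).
  assert (Hx1 : INR k / INR n <= INR (S k) / INR n)
    by (unfold Rdiv; apply Rmult_le_compat_r; [left; apply Rinv_0_lt_compat; exact Hnp| rewrite S_INR; lra]).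
  assert (Hx2 : INR (S k) / INR n <= 1).
  { apply (Rmult_le_reg_r (INR n)); [exact Hnp|]. unfold Rdiv. rewrite Rmult_assoc, Rinv_l by lra.
    rewrite Rmult_1_r, Rmult_1_l. apply le_INR. lia. }
  assert (Hd := Hdec _ _ Hx0 Hx1 Hx2). cbv beta in Hd.
  assert (Hp := psi_diff n k ltac:(lia) ltac:(lia)).
  assert (Hb1 := fl_le (f (INR (S k) / INR n)) (Binomial.C n (S k)) (C_pos _ _)).
  assert (Hb0 := fl_gt (f (INR k / INR n)) (Binomial.C n k) (C_pos _ _)).
  unfold b. lra.
Qed.
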